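(* Let $|\psi\rangle,|\phi\rangle$ be pure states in a finite-dimensional Hilbert space $\mathcal H$. For every $\alpha\in(0,1)\cup(1,2)$ and every $\beta\in(-\infty,0)\cup(0,+\infty)$, $$J_{\alpha,\beta}\big(|\psi\rangle\langle\psi|,|\phi\rangle\langle\phi|\big)=J'_{2-\alpha,\beta}\big(|\psi\rangle\langle\psi|,|\phi\rangle\langle\phi|\big).$$
   Context: For a density operator $\rho$, $\alpha\in(0,1)\cup(1,\infty)$, $\beta\in(-\infty,0)\cup(0,\infty)$, the quantum $(\alpha,\beta)$ entropy is $S_{\alpha,\beta}(\rho)=\frac{1}{(1-\alpha)\beta}\big[(\mathrm{Tr}\,\rho^{\alpha})^{\beta}-1\big]$ and the quantum $(\alpha,\beta)$-relative entropy is $D_{\alpha,\beta}(\rho\|\sigma)=\frac{1}{(1-\alpha)\beta}\big[1-(\mathrm{Tr}(\rho^{\alpha}\sigma^{1-\alpha}))^{\beta}\big]$, where any negative power of a density operator is taken only on its support (zero eigenvalues are kept as zero). The two quantum $(\alpha,\beta)$ Jensen–Shannon divergences are $J_{\alpha,\beta}(\rho,\sigma)=S_{\alpha,\beta}\big(\tfrac{\rho+\sigma}{2}\big)-\tfrac12 S_{\alpha,\beta}(\rho)-\tfrac12 S_{\alpha,\beta}(\sigma)$ and $J'_{\alpha,\beta}(\rho,\sigma)=\tfrac12\big[D_{\alpha,\beta}\big(\rho\|\tfrac{\rho+\sigma}{2}\big)+D_{\alpha,\beta}\big(\sigma\|\tfrac{\rho+\sigma}{2}\big)\big]$. *)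

(* Defs.v *)
From HB Require Import structures.
From mathcomp Require Import all_boot all_order all_algebra.
From mathcomp Require Import all_classical all_reals.
From mathcomp Require Import exp.
From mathcomp Require complex.
Import complex.

Set Implicit Arguments.
Unset Strict Implicit.
Unset Printing Implicit Defensive.
Import Order.TTheory GRing.Theory Num.Theory.
Local Open Scope ring_scope.
Local Open Scope sesquilinear_scope.

Section QJS.
Variable R : realType.
Local Notation C := R[i].

(* real power of a (real, nonnegative) eigenvalue; zero eigenvalues are kept
   as zero (powers are taken on the support only) *)
Definition eigpow (z : C) (a : R) : R :=
  if z == 0 then 0 else (complex.Re z) `^ a.

(* A^a := U^* diag(lambda_i^a) U, where A = U^-1 diag(lambda) U is the spectral
   decomposition (U = spectralmx A unitary, lambda = spectral_diag A). *)
Definition mxpowR n (A : 'M[C]_n) (a : R) : 'M[C]_n :=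
  (spectralmx A)^t* *m diag_mx (\row_i (eigpow (spectral_diag A 0 i) a)%:C%C)
    *m spectralmx A.

(* real part of the trace (all traces used below are real) *)
Definition trR n (A : 'M[C]_n) : R := complex.Re (\tr A).

Definition Sab n (a b : R) (rho : 'M[C]_n) : R :=
  ((trR (mxpowR rho a)) `^ b - 1) / ((1 - a) * b).

Definition Dab n (a b : R) (rho sigma : 'M[C]_n) : R :=
  (1 - (trR (mxpowR rho a *m mxpowR sigma (1 - a))) `^ b) / ((1 - a) * b).

Definition mixmx n (rho sigma : 'M[C]_n) : 'M[C]_n := (2%:R)^-1 *: (rho + sigma).

Definition Jab n (a b : R) (rho sigma : 'M[C]_n) : R :=
  Sab a b (mixmx rho sigma) - 2^-1 * Sab a b rho - 2^-1 * Sab a b sigma.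

Definition J'ab n (a b : R) (rho sigma : 'M[C]_n) : R :=
  2^-1 * (Dab a b rho (mixmx rho sigma) + Dab a b sigma (mixmx rho sigma)).

Definition ketbra n (psi : 'cV[C]_n) : 'M[C]_n := psi *m psi^t*.

Definition unit_ket n (psi : 'cV[C]_n) : Prop := psi^t* *m psi = 1%:M.

End QJS.

(* Main.v *)
Require Import Defs.
From HB Require Import structures.
From mathcomp Require Import all_boot all_order all_algebra.
From mathcomp Require Import all_classical all_reals.
From mathcomp Require Import exp.
From mathcomp Require Import ring.
From mathcomp Require complex.
Import complex.
Import Order.TTheory GRing.Theory Num.Theory.
Local Open Scope ring_scope.
Local Open Scope sesquilinear_scope.
Set Implicit Arguments.
Unset Strict Implicit.

Section H.
Variable R : realType.
Local Notation C := (complex.complex R).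

Lemma unitP n (P : 'M[C]_n) : P \is unitarymx -> P^t* *m P = 1%:M.
Proof. by move=> u; rewrite -[P^t*]mul1mx mulmxKtV. Qed.

Lemma spec_decomp n (A : 'M[C]_n) : A \is normalmx ->
  A = (spectralmx A)^t* *m diag_mx (spectral_diag A) *m spectralmx A.
Proof.
by move/orthomx_spectralP => {1}->; rewrite invmx_unitary // spectral_unitarymx.
Qed.

Lemma spec_diag n (A : 'M[C]_n) : A \is normalmx ->
  diag_mx (spectral_diag A) = spectralmx A *m A *m (spectralmx A)^t*.
Proof.
move=> nA; have uP := spectral_unitarymx A; have E := spec_decomp nA.
move: uP E; set P := spectralmx A; set d := spectral_diag A => uP E.
rewrite [in RHS]E !mulmxA.
by rewrite (unitarymxP uP) mul1mx mulmxtVK.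
Qed.

Lemma tr_conj n (P X : 'M[C]_n) : P \is unitarymx -> \tr (P^t* *m X *m P) = \tr X.
Proof. by move=> u; rewrite mxtrace_mulC mulmxA (unitarymxP u) mul1mx. Qed.

Lemma tr_diag n (X : 'M[C]_n) d : \tr (X *m diag_mx d) = \sum_i X i i * d 0 i.
Proof. by rewrite /mxtrace; apply: eq_bigr => i _; rewrite mul_mx_diag mxE. Qed.

Lemma diag_ii n (d : 'rV[C]_n) i : diag_mx d i i = d 0 i.
Proof. by rewrite mxE eqxx mulr1n. Qed.

Lemma pow_idem n (A : 'M[C]_n) s : A \is normalmx -> A *m A = A -> mxpowR A s = A.
Proof.
move=> nA AA; rewrite /mxpowR.
have uP := spectral_unitarymx A.
set P := spectralmx A in uP *; set d := spectral_diag A.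
have DD : diag_mx d *m diag_mx d = diag_mx d.
  rewrite /d (spec_diag nA) -/P.
  have -> : P *m A *m P^t* *m (P *m A *m P^t*) = P *m A *m (P^t* *m P) *m A *m P^t*
    by rewrite !mulmxA.
  by rewrite unitP // mulmx1 -(mulmxA P A A) AA.
suff -> : \row_i (eigpow (spectral_diag A 0 i) s)%:C%C = d by rewrite -spec_decomp.
apply/rowP => i; rewrite mxE -/d.
have /matrixP /(_ i i) := DD; rewrite mul_diag_mx mxE !diag_ii => e.
have : d 0 i * (d 0 i - 1) = 0 by rewrite mulrBr mulr1 e subrr.
rewrite /eigpow; move/eqP; rewrite mulf_eq0 subr_eq0 => /orP[]/eqP->.
  by rewrite eqxx.
by rewrite oner_eq0 /= powR1.
Qed.

Lemma adj_mul m n p (A : 'M[C]_(m, n)) (B : 'M[C]_(n, p)) : (A *m B)^t* = B^t* *m A^t*.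
Proof. by rewrite trmx_mul map_mxM. Qed.

Lemma ketbra_adj n (psi : 'cV[C]_n) : (ketbra psi)^t* = ketbra psi.
Proof. by rewrite /ketbra adj_mul trmxCK. Qed.

Lemma herm_normal n (A : 'M[C]_n) : A^t* = A -> A \is normalmx.
Proof. by move=> h; apply/normalmxP; rewrite h. Qed.

Lemma ketbra_idem n (psi : 'cV[C]_n) : unit_ket psi ->
  ketbra psi *m ketbra psi = ketbra psi.
Proof.
by move=> u; rewrite /ketbra mulmxA -(mulmxA psi) u mulmx1.
Qed.

Lemma tr_ketbra n (psi : 'cV[C]_n) : unit_ket psi -> \tr (ketbra psi) = 1.
Proof. by move=> u; rewrite /ketbra mxtrace_mulC u mxtrace1. Qed.

Lemma mix_adj n (A B : 'M[C]_n) : A^t* = A -> B^t* = B -> (mixmx A B)^t* = mixmx A B.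
Proof.
move=> hA hB; apply/matrixP => i j.
have /matrixP /(_ i j) := hA; have /matrixP /(_ i j) := hB.
rewrite /mixmx !mxE => <- <-.
by rewrite rmorphM rmorphD fmorphV rmorph_nat.
Qed.

Lemma ge0C (z : C) : 0 <= z -> z = (complex.Re z)%:C%C /\ 0 <= complex.Re z.
Proof.
rewrite lecE; case: z => r t /andP[/eqP /= -> h]; split => //.
Qed.

Lemma ketbra_conj_ge0 n (P : 'M[C]_n) (psi : 'cV[C]_n) i :
  0 <= (P *m ketbra psi *m P^t*) i i.
Proof.
rewrite /ketbra mulmxA -mulmxA -adj_mul.
rewrite mxE big_ord1 !mxE; exact: mul_conjC_ge0.
Qed.
Lemma zid (V : zmodType) (a b p q : V) :
  (a + p - (q + b)) + (a - p + (q - b)) = (a - b) *+ 2.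
Proof.
rewrite mulr2n opprD !addrA.
rewrite [a + p - q - b + a]addrC !addrA.
rewrite [_ - b - p]addrAC [_ - q - p]addrAC addrK [_ - b + q]addrAC subrK.
by rewrite [a + a - b]addrAC.
Qed.

Lemma two_neq0 : (2 : C) != 0.
Proof. by rewrite pnatr_eq0. Qed.

Lemma mixE n (A B : 'M[C]_n) : A + B = 2 *: mixmx A B.
Proof. by rewrite /mixmx scalerA mulfV ?two_neq0 // scale1r. Qed.

Lemma anticomm n (A B : 'M[C]_n) : A *m A = A -> B *m B = B ->
  (A - B) *m mixmx A B + mixmx A B *m (A - B) = A - B.
Proof.
move=> hA hB; rewrite /mixmx -scalemxAr -scalemxAl -scalerDr.
rewrite mulmxBl mulmxDl !mulmxBr !mulmxDr hA hB zid.
rewrite -[(A - B) *+ 2]scaler_nat scalerA mulVf ?two_neq0 // scale1r. reflexivity.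
Qed.

Lemma conj_scale n (P X : 'M[C]_n) c : P *m (c *: X) *m P^t* = c *: (P *m X *m P^t*).
Proof. by rewrite -scalemxAr -scalemxAl. Qed.

Lemma conj_add n (P X Y : 'M[C]_n) :
  P *m (X + Y) *m P^t* = P *m X *m P^t* + P *m Y *m P^t*.
Proof. by rewrite mulmxDr mulmxDl. Qed.

Lemma conj_sub n (P X Y : 'M[C]_n) :
  P *m (X - Y) *m P^t* = P *m X *m P^t* - P *m Y *m P^t*.
Proof. by rewrite mulmxBr mulmxBl. Qed.

Lemma eig_succ (r : R) s : 0 <= r ->
  r%:C%C * (eigpow r%:C%C s)%:C%C = (eigpow r%:C%C (s + 1))%:C%C.
Proof.
move=> r0; rewrite /eigpow.
have -> : (r%:C%C == 0) = (r == 0) by rewrite eq_complex /= eqxx andbT.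
have [->|rn0] := eqVneq r 0; first by rewrite mul0r.
rewrite /= powRD ?rn0 ?implybT // powRr1 // -rmorphM mulrC.
by [].
Qed.

Lemma conjM n (P X Y : 'M[C]_n) : P \is unitarymx ->
  (P *m X *m P^t* ) *m (P *m Y *m P^t* ) = P *m (X *m Y) *m P^t*.
Proof.
move=> u; rewrite !mulmxA -[P *m X *m P^t* *m P]mulmxA unitP // mulmx1 ?mulmxA; reflexivity.
Qed.

Lemma tr_conj' n (P X : 'M[C]_n) : P \is unitarymx -> \tr (P *m X *m P^t* ) = \tr X.
Proof. by move=> u; rewrite mxtrace_mulC mulmxA unitP // mul1mx. Qed.

Section Mix.
Variables (n : nat) (psi phi : 'cV[C]_n).
Hypotheses (upsi : unit_ket psi) (uphi : unit_ket phi).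
Let rho := ketbra psi.
Let sig := ketbra phi.
Let M := mixmx rho sig.
Let P := spectralmx M.
Let d := spectral_diag M.

Lemma M_normal : M \is normalmx.
Proof. by apply: herm_normal; rewrite /M mix_adj // ketbra_adj. Qed.

Lemma uP : P \is unitarymx.
Proof. exact: spectral_unitarymx. Qed.

Lemma d_ge0 i : 0 <= d 0 i.
Proof.
rewrite -diag_ii /d (spec_diag M_normal) -/P /M /mixmx conj_scale conj_add.
rewrite mxE mxE mulr_ge0 ?invr_ge0 ?ler0n // addr_ge0 //; exact: ketbra_conj_ge0.
Qed.

Lemma trMMs s : \tr (M *m mxpowR M s) = \tr (mxpowR M (s + 1)).
Proof.
have EM : M = P^t* *m diag_mx d *m P := spec_decomp M_normal.
rewrite /mxpowR -/P -/d {1}EM !mulmxA -[P^t* *m diag_mx d *m P *m P^t*]mulmxA.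
rewrite (unitarymxP uP) mulmx1 -[P^t* *m diag_mx d *m _]mulmxA.
rewrite !tr_conj ?uP // tr_diag mxtrace_diag.
apply: eq_bigr => i _; rewrite diag_ii !mxE.
have [-> h] := ge0C (d_ge0 i); exact: eig_succ.
Qed.

Lemma trX s : \tr ((rho - sig) *m mxpowR M s) = 0.
Proof.
set X' := P *m (rho - sig) *m P^t*.
have AC : X' *m diag_mx d + diag_mx d *m X' = X'.
  rewrite /d (spec_diag M_normal) -/P /X' !conjM ?uP // -conj_add anticomm //.
    exact: ketbra_idem.
  exact: ketbra_idem.
have trX' : \tr X' = 0.
  by rewrite tr_conj' ?uP // raddfB /= !tr_ketbra // subrr.
rewrite /mxpowR -/P -/d mulmxA mxtrace_mulC !mulmxA -/X' tr_diag.
clearbody X'.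
set c := (eigpow (2^-1 : C) s)%:C%C.
rewrite (eq_bigr (fun i => X' i i * c)).
  by rewrite -mulr_suml -/(mxtrace X') trX' mul0r.
move=> i _; rewrite mxE.
have [->|nz] := eqVneq (X' i i) 0; first by rewrite !mul0r.
congr (_ * _).
have /matrixP /(_ i i) := AC; rewrite mxE mul_mx_diag mul_diag_mx !mxE => h.
have : X' i i * (d 0 i * 2 - 1) = 0.
  transitivity (X' i i * d 0 i + d 0 i * X' i i - X' i i); first by ring.
  by rewrite h subrr.
move/eqP; rewrite mulf_eq0 (negbTE nz) /= subr_eq0 => /eqP h2.
have -> : d 0 i = 2^-1.
  by apply: (mulIf two_neq0); rewrite mulVf ?two_neq0.
by [].
Qed.

Lemma tr_rho s : \tr (rho *m mxpowR M s) = \tr (mxpowR M (s + 1)).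
Proof.
have h1 := trX s; rewrite mulmxBl raddfB /= in h1.
have h2 : \tr (rho *m mxpowR M s) + \tr (sig *m mxpowR M s) = 2 * \tr (mxpowR M (s + 1)).
  by rewrite -raddfD /= -mulmxDl mixE -scalemxAl mxtraceZ trMMs.
move/eqP: h1; rewrite subr_eq0 => /eqP h1.
rewrite -h1 in h2; apply: (mulfI two_neq0); rewrite -h2; ring.
Qed.

End Mix.
End H.

Lemma mix_comm (R : realType) n (A B : 'M[complex.complex R]_n) : mixmx A B = mixmx B A.
Proof. by rewrite /mixmx addrC. Qed.

Theorem proposition1 (R : realType) (n : nat) (psi phi : 'cV[complex.complex R]_n)
  (a b : R) :
  unit_ket psi -> unit_ket phi ->
  (0 < a < 1 \/ 1 < a < 2) -> b != 0 ->
  Jab a b (ketbra psi) (ketbra phi) = J'ab (2 - a) b (ketbra psi) (ketbra phi).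
Proof.
move=> upsi uphi ha hb.
have Pr s : mxpowR (ketbra psi) s = ketbra psi.
  by apply: pow_idem; [apply: herm_normal; exact: ketbra_adj | exact: ketbra_idem].
have Ps s : mxpowR (ketbra phi) s = ketbra phi.
  by apply: pow_idem; [apply: herm_normal; exact: ketbra_adj | exact: ketbra_idem].
have Sr : Sab a b (ketbra psi) = 0.
  by rewrite /Sab Pr /trR tr_ketbra //= powR1 subrr mul0r.
have Ss : Sab a b (ketbra phi) = 0.
  by rewrite /Sab Ps /trR tr_ketbra //= powR1 subrr mul0r.
have e1 : 1 - (2 - a) = a - 1 by ring.
have e2 : a - 1 + 1 = a by ring.
have Dr : Dab (2 - a) b (ketbra psi) (mixmx (ketbra psi) (ketbra phi)) =
   (1 - (trR (mxpowR (mixmx (ketbra psi) (ketbra phi)) a)) `^ b) / ((1 - (2 - a)) * b).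
  by rewrite /Dab Pr e1 /trR (tr_rho upsi uphi) e2.
have Ds : Dab (2 - a) b (ketbra phi) (mixmx (ketbra psi) (ketbra phi)) =
   (1 - (trR (mxpowR (mixmx (ketbra psi) (ketbra phi)) a)) `^ b) / ((1 - (2 - a)) * b).
  by rewrite /Dab Ps e1 mix_comm /trR (tr_rho uphi upsi) e2.
rewrite /Jab /J'ab Sr Ss Dr Ds /Sab.
have ha1 : 1 - a != 0.
  by rewrite subr_eq0; case: ha => /andP[h1 h2]; [rewrite gt_eqF | rewrite lt_eqF].
set T := _ `^ b.
field; rewrite hb ha1 e1 andbT /=.
by rewrite -oppr_eq0 opprB.
Qed.
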